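(* Let $X$ be a discrete random variable with alphabet $\mathcal{X}$ and law $p_X$, let $f:\mathcal{X}\to\mathcal{Y}$ be a deterministic function (the encoder), and let $Y=f(X)$ (the bitstream). Let $\hat{X}=g(Y)$ be a reconstruction produced by a (possibly stochastic) decoder $g$ such that, conditionally on $Y$, $\hat{X}$ is distributed according to the posterior $p_{X|Y}$, i.e. for every $y$ with $p_Y(Y=y)\neq 0$, $\hat{X}$ given $Y=y$ has law $p_{X|Y}(\cdot\mid Y=y)$. Then $f(\hat{X})=Y$ almost surely.
   Context: Such a codec (deterministic encoder, decoder sampling from the posterior of the source given the code) is called a conditional generative model-based image codec. A codec is called idempotent if re-encoding the reconstruction gives back the same code, i.e. $f(\hat{X})=Y$. *)

(* Defs.v *)
From HB Require Import structures.
From mathcomp Require Import all_boot all_order all_algebra.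
From mathcomp Require Import all_classical all_reals all_analysis.
Set Implicit Arguments. Unset Strict Implicit. Unset Printing Implicit Defensive.
Import Order.TTheory GRing.Theory Num.Theory.
Local Open Scope classical_set_scope.
Local Open Scope ring_scope.

(* Elementary conditional probability P(A | B) = P(A ∩ B) / P(B), real-valued
   (probability measures are finite, so fine is harmless). *)
Definition cprob (d : measure_display) (Omega : measurableType d) (R : realType)
  (P : probability Omega R) (A B : set Omega) : R :=
  fine (P (A `&` B)) / fine (P B).

(* Main.v *)
Require Import Defs.
From HB Require Import structures.
From mathcomp Require Import all_boot all_order all_algebra.
From mathcomp Require Import all_classical all_reals all_analysis.
Import Order.TTheory GRing.Theory Num.Theory.
Local Open Scope classical_set_scope.
Local Open Scope ring_scope.

Theorem theorem1 (d : measure_display) (Omega : measurableType d) (R : realType)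
  (P : probability Omega R)
  (AX : countType) (AY : Type) (f : AX -> AY)
  (X Xhat : Omega -> AX)
  (mX : forall x : AX, measurable [set w | X w = x])
  (mXhat : forall x : AX, measurable [set w | Xhat w = x])
  (posterior : forall y : AY, P [set w | f (X w) = y] != 0%E ->
     forall x : AX,
       cprob P [set w | Xhat w = x] [set w | f (X w) = y] =
       cprob P [set w | X w = x] [set w | f (X w) = y]) :
  {ae P, forall w, f (Xhat w) = f (X w)}.
Proof.
have mY : forall y, measurable [set w | f (X w) = y].
  move=> y.
  have -> : [set w | f (X w) = y] =
      \bigcup_(x : AX) (if pselect (f x = y) then [set w | X w = x] else set0).
    apply/seteqP; split=> w /=.
      move=> H; exists (X w) => //; case: pselect => //.
    case=> x _; case: pselect => // e; rewrite /= => ->; exact: e.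
  apply: countable_bigcupT_measurable; first exact: countableP.
  move=> x; case: (pselect (f x = y)) => _ /=; [exact: mX | exact: measurable0].
pose S (p : AX * AX) := [set w | X w = p.1 /\ Xhat w = p.2 /\ f p.2 <> f p.1].
have negS : forall p, P.-negligible (S p).
  case=> x x'; rewrite /S /=.
  have [e|ne] := pselect (f x' = f x).
    by apply: (negligibleS _ (negligible_set0 P)) => w /= [_ [_]].
  have mA : measurable ([set w | Xhat w = x'] `&` [set w | f (X w) = f x]).
    exact: measurableI.
  apply: (negligibleS (A := [set w | Xhat w = x'] `&` [set w | f (X w) = f x])).
    by move=> w /= [-> [-> _]].
  have [Y0|Y0] := eqVneq (P [set w | f (X w) = f x]) 0%E.
    apply: (negligibleS (A := [set w | f (X w) = f x])); first by move=> w [].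
    exact/negligibleP.
  apply/negligibleP => //.
  have := posterior _ Y0 x'.
  have E0 : P ([set w | X w = x'] `&` [set w | f (X w) = f x]) = 0%E.
    have -> : [set w | X w = x'] `&` [set w | f (X w) = f x] = set0.
      by apply/seteqP; split=> w //= [-> ].
    exact: measure0.
  rewrite /cprob E0 /= mul0r => /eqP.
  rewrite mulf_eq0 invr_eq0 !fine_eq0 ?fin_num_measure // (negbTE Y0) orbF.
  by move/eqP.
apply: (negligibleS (A := \bigcup_k (if @unpickle (AX * AX)%type k is Some p then S p else set0))).
  move=> w /= H; exists (pickle (X w, Xhat w)) => //.
  by rewrite pickleK /S /=; split => //; split => // E; apply: H; rewrite E.
apply: negligible_bigcup => k; case: unpickle => [p|] //.
exact: negligible_set0.
Qed.
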